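(* Let $\theta,\eta\in\mathbb{R}$, $\gamma,\beta\in\mathbb{R}$. The inequality $\int_0^tu^{-\eta}[h^{-1}(1/u)]^{\gamma}(t-u)^{-\theta}[h^{-1}(1/(t-u))]^{\beta}\,du\le c\,t^{1-\eta-\theta}[h^{-1}(1/t)]^{\gamma+\beta}$ holds: (i) for all $t>0$, whenever $\beta,\gamma\ge0$, $\beta/2+1-\theta>0$ and $\gamma/2+1-\eta>0$, with $c=B(\beta/2+1-\theta,\gamma/2+1-\eta)$; (ii) if $h$ satisfies $h(r)\le C_h\lambda^{\alpha_h}h(\lambda r)$ for all $\lambda\le1$, $r\le1$ (some $\alpha_h\in(0,2]$, $C_h\ge1$), then for every $T>0$, all $t\in(0,T]$ and all $\beta,\gamma\in\mathbb{R}$ with $(\beta/2)\wedge(\beta/\alpha_h)+1-\theta>0$ and $(\gamma/2)\wedge(\gamma/\alpha_h)+1-\eta>0$, with $c=(C_h[h^{-1}(1/T)\vee1]^2)^{-(\beta\wedge0+\gamma\wedge0)/\alpha_h}\,B\big((\beta/2)\wedge(\beta/\alpha_h)+1-\theta,\,(\gamma/2)\wedge(\gamma/\alpha_h)+1-\eta\big)$.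
   Context: Let $d\in\mathbb{N}$ and let $\nu:[0,\infty)\to[0,\infty]$ be non-increasing with $\int_{\mathbb{R}^d}(1\wedge|x|^2)\nu(|x|)\,dx<\infty$. For $r>0$ let $h(r)=\int_{\mathbb{R}^d}\big(1\wedge \tfrac{|x|^2}{r^2}\big)\nu(|x|)\,dx$; assume $h(0^+)=\infty$, so $h$ is a continuous strictly decreasing bijection of $(0,\infty)$ onto $(0,\infty)$ with inverse $h^{-1}$. $B(a,b)=\int_0^1s^{a-1}(1-s)^{b-1}ds$ is the Beta function. *)

(* Defs.v *)
From Stdlib Require Import Reals Lra ClassicalEpsilon.
Open Scope R_scope.

Definition imp_int_ab (f : R -> R) (a b l : R) : Prop :=
  a < b /\
  (forall x y, a < x -> x <= y -> y < b -> inhabited (Riemann_integrable f x y)) /\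
  (forall eps, 0 < eps -> exists del, 0 < del /\
     forall x y (pr : Riemann_integrable f x y),
       a < x -> x < a + del -> b - del < y -> y < b -> x <= y ->
       Rabs (RiemannInt pr - l) < eps).

Definition imp_int_0inf (f : R -> R) (l : R) : Prop :=
  (forall x y, 0 < x -> x <= y -> inhabited (Riemann_integrable f x y)) /\
  (forall eps, 0 < eps -> exists del, 0 < del /\ exists M,
     forall x y (pr : Riemann_integrable f x y),
       0 < x -> x < del -> M < y -> x <= y ->
       Rabs (RiemannInt pr - l) < eps).

Definition Beta (a b : R) : R :=
  epsilon (inhabits 0)
    (fun l => imp_int_ab (fun s => Rpower s (a - 1) * Rpower (1 - s) (b - 1)) 0 1 l).

Fixpoint ball_vol (d : nat) : R :=
  match d with
  | O => 1
  | S O => 2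
  | S (S k as m) => 2 * PI / INR (S m) * ball_vol k
  end.

Definition sphere_area (d : nat) : R := INR d * ball_vol d.

(* h(r) = int_{R^d} (1 /\ |x|^2/r^2) nu(|x|) dx, written in polar coordinates:
   |S^{d-1}| * int_0^oo (1 /\ s^2/r^2) nu(s) s^(d-1) ds. *)
Definition hfun (d : nat) (nu : R -> R) (r : R) : R :=
  sphere_area d *
  epsilon (inhabits 0)
    (fun l => imp_int_0inf (fun s => Rmin 1 (s ^ 2 / r ^ 2) * nu s * s ^ (pred d)) l).

Definition hinv (d : nat) (nu : R -> R) (y : R) : R :=
  epsilon (inhabits 0) (fun r => 0 < r /\ hfun d nu r = y).

Definition conv_integrand (d : nat) (nu : R -> R) (theta eta gam bet t u : R) : R :=
  Rpower u (- eta) * Rpower (hinv d nu (1 / u)) gam *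
  Rpower (t - u) (- theta) * Rpower (hinv d nu (1 / (t - u))) bet.

(* Main.v *)
Require Import Defs.
From Stdlib Require Import Reals.
From Coquelicot Require Import Coquelicot.
From Stdlib Require Import Lra Lia ClassicalEpsilon Classical RList.
Open Scope R_scope.


Lemma exp_le_mono : forall x y, x <= y -> exp x <= exp y.
Proof. intros x y H; destruct (Rle_lt_or_eq_dec _ _ H) as [H1|H1].
  - left; apply exp_increasing; auto.
  - subst; lra. Qed.

Lemma ac_ext : forall f g a b l lf, a <= b -> adapted_couple f a b l lf ->
  (forall x, a < x < b -> f x = g x) -> adapted_couple g a b l lf.
Proof.
  intros f g a b l lf Hab [Hord [H0 [H1 [Hlen Hc]]]] Heq.
  repeat split; auto.
  intros i Hi x Hx.
  rewrite <- (Hc i Hi x Hx). symmetry; apply Heq.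
  unfold open_interval in Hx.
  assert (Hm : Rmin a b = a) by (unfold Rmin; destruct (Rle_dec a b); lra).
  assert (HM : Rmax a b = b) by (unfold Rmax; destruct (Rle_dec a b); lra).
  assert (A1 : pos_Rl l 0 <= pos_Rl l i).
  { apply RList_P5; auto. apply RList_P3. exists i; split; auto. lia. }
  assert (A2 : pos_Rl l (S i) <= pos_Rl l (pred (length l))).
  { apply RList_P7; auto. apply RList_P3. exists (S i); split; auto. lia. }
  lra.
Qed.

Lemma isf_ext : forall f g a b, a <= b -> IsStepFun f a b ->
  (forall x, a < x < b -> f x = g x) -> IsStepFun g a b.
Proof.
  intros f g a b Hab [l [lf H]] Heq. exists l. exists lf. eapply ac_ext; eauto.
Qed.

Definition AP (f : R -> R) (a b e : R) : Type :=
  {phi : StepFun a b & {psi : StepFun a b |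
     (forall t, a <= t <= b -> Rabs (f t - phi t) <= psi t) /\ RiemannInt_SF psi <= e}}.

Lemma AP_mono : forall f a b e e', AP f a b e -> e <= e' -> AP f a b e'.
Proof. intros f a b e e' [phi [psi [H1 H2]]] He. exists phi, psi; split; auto; lra. Qed.

Definition glue (b : R) (p q : R -> R) (x : R) : R :=
  if Rle_dec x b then p x else q x.

Lemma glue_sf : forall a b c (p : StepFun a b) (q : StepFun b c),
  a <= b -> b <= c ->
  {pr1 : IsStepFun (glue b p q) a b & {pr2 : IsStepFun (glue b p q) b c &
    IsStepFun (glue b p q) a c}}.
Proof.
  intros a b c p q Hab Hbc.
  assert (pr1 : IsStepFun (glue b p q) a b).
  { apply (isf_ext p); auto. apply pre. intros x Hx; unfold glue.
    destruct (Rle_dec x b); auto; lra. }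
  assert (pr2 : IsStepFun (glue b p q) b c).
  { apply (isf_ext q); auto. apply pre. intros x Hx; unfold glue.
    destruct (Rle_dec x b); auto; lra. }
  exists pr1, pr2. eapply StepFun_P46; eauto.
Qed.

Lemma AP_glue : forall f a b c e1 e2, a <= b -> b <= c ->
  AP f a b e1 -> AP f b c e2 -> AP f a c (e1 + e2).
Proof.
  intros f a b c e1 e2 Hab Hbc [phi1 [psi1 [A1 B1]]] [phi2 [psi2 [A2 B2]]].
  destruct (glue_sf a b c phi1 phi2 Hab Hbc) as [p1 [p2 p3]].
  destruct (glue_sf a b c psi1 psi2 Hab Hbc) as [q1 [q2 q3]].
  exists (mkStepFun p3), (mkStepFun q3). split.
  - intros t Ht; simpl; unfold glue. destruct (Rle_dec t b).
    + apply A1; lra.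
    + apply A2; lra.
  - rewrite <- (StepFun_P43 q1 q2 q3).
    assert (I1 : RiemannInt_SF (mkStepFun q1) <= RiemannInt_SF psi1).
    { apply StepFun_P37; auto. intros x Hx; simpl; unfold glue.
      destruct (Rle_dec x b); lra. }
    assert (I2 : RiemannInt_SF (mkStepFun q2) <= RiemannInt_SF psi2).
    { apply StepFun_P37; auto. intros x Hx; simpl; unfold glue.
      destruct (Rle_dec x b); lra. }
    lra.
Qed.

Definition dom (f G : R -> R) (a b : R) : Prop :=
  forall s u, a <= s -> s <= u -> u <= b -> Rabs (f u - f s) <= G u - G s.

Lemma dom_sub : forall f G a b a' b', dom f G a b -> a <= a' -> b' <= b -> dom f G a' b'.
Proof. unfold dom; intros; apply H; lra. Qed.

Lemma AP_base : forall f G a b, a <= b -> dom f G a b -> AP f a b ((b - a) * (G b - G a)).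
Proof.
  intros f G a b Hab HG.
  exists (mkStepFun (StepFun_P4 a b (f a))), (mkStepFun (StepFun_P4 a b (G b - G a))).
  split.
  - intros t Ht; simpl; unfold fct_cte.
    assert (X1 := HG a t (Rle_refl a) (proj1 Ht) (proj2 Ht)).
    assert (X2 := HG t b (proj1 Ht) (proj2 Ht) (Rle_refl b)).
    assert (X3 := Rabs_pos (f b - f t)). lra.
  - rewrite StepFun_P18. right; ring.
Qed.

Lemma AP_unif : forall f G n a d, 0 <= d -> dom f G a (a + INR (S n) * d) ->
  AP f a (a + INR (S n) * d) (d * (G (a + INR (S n) * d) - G a)).
Proof.
  intros f G n; induction n as [|n IH]; intros a d Hd HG.
  - eapply AP_mono. apply AP_base. simpl; lra. exact HG. simpl; right; ring.
  - assert (Hb : a + d + INR (S n) * d = a + INR (S (S n)) * d).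
    { rewrite (S_INR (S n)); ring. }
    assert (Hn := pos_INR (S n)).
    assert (X1 : AP f a (a + d) (d * (G (a + d) - G a))).
    { eapply AP_mono. apply AP_base. lra. eapply dom_sub; [exact HG | lra | ].
      rewrite S_INR. nra. right; ring. }
    assert (X2 : AP f (a + d) (a + INR (S (S n)) * d)
                  (d * (G (a + INR (S (S n)) * d) - G (a + d)))).
    { rewrite <- Hb. apply IH; auto. rewrite Hb. eapply dom_sub; eauto. lra. lra. }
    eapply AP_mono. apply (AP_glue f a (a + d)); [lra | | exact X1 | exact X2].
    rewrite <- Hb. nra. right; ring.
Qed.

Lemma dom_RI : forall f G a b, a < b -> dom f G a b -> Riemann_integrable f a b.
Proof.
  intros f G a b Hab HG eps.
  set (D := G b - G a).
  assert (HD : 0 <= D).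
  { unfold D; assert (X := HG a b (Rle_refl a) (Rlt_le _ _ Hab) (Rle_refl b));
    assert (Y := Rabs_pos (f b - f a)); lra. }
  assert (He : 0 < eps / ((b - a) * (D + 1))).
  { apply Rdiv_lt_0_compat. apply cond_pos. apply Rmult_lt_0_compat; lra. }
  destruct (constructive_indefinite_description _ (archimed_cor1 _ He)) as [N [HN1 HN2]].
  destruct N as [|n]; [lia|].
  set (d := (b - a) / INR (S n)).
  assert (HSn : 0 < INR (S n)) by (apply lt_0_INR; lia).
  assert (Hd : 0 <= d) by (unfold d; apply Rlt_le, Rdiv_lt_0_compat; lra).
  assert (Hbd : a + INR (S n) * d = b) by (unfold d; field; lra).
  assert (X := AP_unif f G n a d Hd).
  rewrite Hbd in X. specialize (X HG).
  destruct X as [phi [psi [A B]]].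
  assert (Hm : Rmin a b = a) by (unfold Rmin; destruct (Rle_dec a b); lra).
  assert (HM : Rmax a b = b) by (unfold Rmax; destruct (Rle_dec a b); lra).
  exists phi, psi. split.
  - rewrite Hm, HM; auto.
  - assert (P0 : 0 <= RiemannInt_SF psi).
    { rewrite <- (Rmult_0_l (b - a)). rewrite <- (StepFun_P18 a b 0).
      apply StepFun_P37; [lra|]. intros x Hx; simpl; unfold fct_cte.
      eapply Rle_trans; [apply Rabs_pos| apply A; lra]. }
    rewrite Rabs_right by lra.
    apply Rle_lt_trans with (d * D); [exact B|].
    unfold d.
    assert (Q : / INR (S n) * ((b - a) * (D + 1)) < eps).
    { apply Rmult_lt_reg_r with (/ ((b - a) * (D + 1))).
      apply Rinv_0_lt_compat; apply Rmult_lt_0_compat; lra.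
      rewrite Rmult_assoc, Rinv_r. rewrite Rmult_1_r. exact HN1.
      apply Rgt_not_eq; apply Rmult_lt_0_compat; lra. }
    apply Rle_lt_trans with (/ INR (S n) * ((b - a) * (D + 1))); [|exact Q].
    unfold Rdiv. assert (0 < / INR (S n)) by (apply Rinv_0_lt_compat; lra).
    assert (0 < b - a) by lra. nra.
Qed.

Definition tame (f : R -> R) (a b : R) : Prop :=
  exists G K, dom f G a b /\ forall s, a <= s <= b -> Rabs (f s) <= K.

Lemma tame_RI : forall f a b, a <= b -> tame f a b -> inhabited (Riemann_integrable f a b).
Proof.
  intros f a b Hab [G [K [H1 H2]]].
  destruct (Rle_lt_or_eq_dec _ _ Hab) as [H|H].
  - constructor; eapply dom_RI; eauto.
  - subst; constructor; apply RiemannInt_P7.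
Qed.

Lemma tame_ext : forall f g a b, tame f a b -> (forall s, a <= s <= b -> f s = g s) -> tame g a b.
Proof.
  intros f g a b [G [K [H1 H2]]] E. exists G, K; split.
  - intros s u Hs Hsu Hu. rewrite <- !E by lra. apply H1; auto.
  - intros s Hs; rewrite <- E by lra; auto.
Qed.

Lemma tame_incr : forall f a b, a <= b -> (forall s u, a <= s -> s <= u -> u <= b -> f s <= f u) -> tame f a b.
Proof.
  intros f a b Hab H. exists f, (Rabs (f a) + Rabs (f b)). split.
  - intros s u Hs Hsu Hu. assert (X := H s u Hs Hsu Hu). rewrite Rabs_right; lra.
  - intros s Hs. assert (X1 := H a s (Rle_refl a) (proj1 Hs) (proj2 Hs)).
    assert (X2 := H s b (proj1 Hs) (proj2 Hs) (Rle_refl b)).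
    unfold Rabs; repeat destruct Rcase_abs; lra.
Qed.

Lemma tame_decr : forall f a b, a <= b -> (forall s u, a <= s -> s <= u -> u <= b -> f u <= f s) -> tame f a b.
Proof.
  intros f a b Hab H. exists (fun x => - f x), (Rabs (f a) + Rabs (f b)). split.
  - intros s u Hs Hsu Hu. assert (X := H s u Hs Hsu Hu). rewrite Rabs_left1; lra.
  - intros s Hs. assert (X1 := H a s (Rle_refl a) (proj1 Hs) (proj2 Hs)).
    assert (X2 := H s b (proj1 Hs) (proj2 Hs) (Rle_refl b)).
    unfold Rabs; repeat destruct Rcase_abs; lra.
Qed.

Lemma tame_mult : forall f g a b, a <= b -> tame f a b -> tame g a b -> tame (fun x => f x * g x) a b.
Proof.
  intros f g a b Hab [Gf [K [Hf Kf]]] [Gg [L [Hg Lg]]].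
  exists (fun x => Rabs K * Gg x + Rabs L * Gf x), (Rabs K * Rabs L). split.
  - intros s u Hs Hsu Hu.
    replace (f u * g u - f s * g s) with (f u * (g u - g s) + g s * (f u - f s)) by ring.
    eapply Rle_trans; [apply Rabs_triang|]. rewrite !Rabs_mult.
    assert (A1 := Hf s u Hs Hsu Hu). assert (A2 := Hg s u Hs Hsu Hu).
    assert (B1 : Rabs (f u) <= Rabs K) by (eapply Rle_trans; [apply Kf; lra | apply RRle_abs]).
    assert (B2 : Rabs (g s) <= Rabs L) by (eapply Rle_trans; [apply Lg; lra | apply RRle_abs]).
    assert (C1 := Rabs_pos (f u)). assert (C2 := Rabs_pos (g s)).
    assert (C3 := Rabs_pos (g u - g s)). assert (C4 := Rabs_pos (f u - f s)).
    assert (Rabs (f u) * Rabs (g u - g s) <= Rabs K * (Gg u - Gg s)) by (apply Rmult_le_compat; lra).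
    assert (Rabs (g s) * Rabs (f u - f s) <= Rabs L * (Gf u - Gf s)) by (apply Rmult_le_compat; lra).
    lra.
  - intros s Hs. rewrite Rabs_mult. apply Rmult_le_compat; try apply Rabs_pos.
    eapply Rle_trans; [apply Kf; lra | apply RRle_abs].
    eapply Rle_trans; [apply Lg; lra | apply RRle_abs].
Qed.

Lemma tame_const : forall k a b, tame (fun _ => k) a b.
Proof. intros k a b. exists (fun _ => 0), (Rabs k). split.
  - intros s u _ _ _. rewrite Rminus_diag, Rabs_R0; lra.
  - intros; lra. Qed.

Lemma tame_exp : forall (phi : R -> R) c a b, a <= b ->
  (forall s u, a <= s -> s <= u -> u <= b -> phi s <= phi u) ->
  tame (fun x => exp (c * phi x)) a b.
Proof.
  intros phi c a b Hab H. destruct (Rle_lt_dec 0 c) as [Hc|Hc].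
  - apply tame_incr; auto. intros s u Hs Hsu Hu. apply exp_le_mono.
    apply Rmult_le_compat_l; auto.
  - apply tame_decr; auto. intros s u Hs Hsu Hu. apply exp_le_mono.
    assert (X := H s u Hs Hsu Hu). nra.
Qed.


Lemma RI_nonneg : forall f a b (pr : Riemann_integrable f a b), a <= b ->
  (forall x, a < x < b -> 0 <= f x) -> 0 <= RiemannInt pr.
Proof.
  intros f a b pr Hab H.
  rewrite <- (Rmult_0_l (b - a)). rewrite <- (RiemannInt_P15 (RiemannInt_P14 a b 0)).
  apply RiemannInt_P19; [exact Hab|]. intros x Hx; unfold fct_cte; apply H; exact Hx.
Qed.

Lemma RI_widen : forall f a' a b b' (pr : Riemann_integrable f a b) (pr' : Riemann_integrable f a' b'),
  a' <= a -> a <= b -> b <= b' ->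
  inhabited (Riemann_integrable f a' a) -> inhabited (Riemann_integrable f b b') ->
  (forall x, a' < x < b' -> 0 <= f x) -> RiemannInt pr <= RiemannInt pr'.
Proof.
  intros f a' a b b' pr pr' H1 H2 H3 [p1] [p2] Hpos.
  set (p3 := RiemannInt_P24 p1 pr).
  assert (E1 := RiemannInt_P26 p1 pr p3).
  assert (E2 := RiemannInt_P26 p3 p2 pr').
  assert (N1 := RI_nonneg f a' a p1 H1 (fun x Hx => Hpos x ltac:(lra))).
  assert (N2 := RI_nonneg f b b' p2 H3 (fun x Hx => Hpos x ltac:(lra))).
  lra.
Qed.

Lemma RInt_scal_R : forall f a b c, ex_RInt f a b -> RInt (fun x => c * f x) a b = c * RInt f a b.
Proof. intros. apply (RInt_scal (V := R_CompleteNormedModule)). auto. Qed.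
Lemma ex_RInt_scal_R : forall f a b c, ex_RInt f a b -> ex_RInt (fun x => c * f x) a b.
Proof. intros. apply (ex_RInt_scal (V := R_NormedModule)). auto. Qed.
Lemma RI_scal_le : forall f g a b c (prf : Riemann_integrable f a b) (prg : Riemann_integrable g a b),
  a <= b -> (forall x, a < x < b -> f x <= c * g x) -> RiemannInt prf <= c * RiemannInt prg.
Proof.
  intros f g a b c prf prg Hab H.
  rewrite <- (RInt_Reals f a b prf), <- (RInt_Reals g a b prg).
  assert (Ef := ex_RInt_Reals_1 _ _ _ prf). assert (Eg := ex_RInt_Reals_1 _ _ _ prg).
  rewrite <- RInt_scal_R by auto.
  apply RInt_le; auto. apply ex_RInt_scal_R; auto.
Qed.

Lemma imp_ab_exists : forall f a b M, a < b ->
  (forall x y, a < x -> x <= y -> y < b -> inhabited (Riemann_integrable f x y)) ->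
  (forall x, a < x < b -> 0 <= f x) ->
  (forall x y (pr : Riemann_integrable f x y), a < x -> x <= y -> y < b -> RiemannInt pr <= M) ->
  exists l, imp_int_ab f a b l /\ l <= M.
Proof.
  intros f a b M Hab Hint Hpos HM.
  set (E := fun v => exists x y (pr : Riemann_integrable f x y), a < x /\ x <= y /\ y < b /\ v = RiemannInt pr).
  assert (HE : bound E).
  { exists M. intros v [x [y [pr [A [B [C D]]]]]]. subst; auto. }
  assert (HE2 : exists v, E v).
  { destruct (Hint ((a+b)/2) ((a+b)/2)) as [pr]; try lra.
    exists (RiemannInt pr), ((a+b)/2), ((a+b)/2), pr. repeat split; lra. }
  destruct (completeness E HE HE2) as [l [Hub Hlub]].
  exists l. split; [|apply Hlub; intros v [x [y [pr [A [B [C D]]]]]]; subst; apply HM; assumption].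
  split; [auto|]. split; [auto|].
  intros eps Heps.
  destruct (classic (exists v, E v /\ l - eps < v)) as [[v [[x0 [y0 [pr0 [A [B [C D]]]]]] Hv]]|Hn].
  - exists (Rmin (x0 - a) (b - y0)). split.
    { apply Rmin_pos; lra. }
    intros x y pr Hx1 Hx2 Hy1 Hy2 Hxy.
    assert (Hm1 := Rmin_l (x0 - a) (b - y0)). assert (Hm2 := Rmin_r (x0 - a) (b - y0)).
    assert (W : RiemannInt pr0 <= RiemannInt pr).
    { apply RI_widen; try lra. apply Hint; lra. apply Hint; lra.
      intros; apply Hpos; lra. }
    assert (U : RiemannInt pr <= l) by (apply Hub; exists x, y, pr; repeat split; lra).
    rewrite Rabs_left1; lra.
  - exfalso. assert (l <= l - eps); [|lra].
    apply Hlub. intros v Ev. destruct (Rle_lt_dec v (l - eps)); auto.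
    exfalso; apply Hn; exists v; auto.
Qed.

Lemma imp_0inf_exists : forall f M,
  (forall x y, 0 < x -> x <= y -> inhabited (Riemann_integrable f x y)) ->
  (forall x, 0 < x -> 0 <= f x) ->
  (forall x y (pr : Riemann_integrable f x y), 0 < x -> x <= y -> RiemannInt pr <= M) ->
  exists l, imp_int_0inf f l /\ l <= M.
Proof.
  intros f M Hint Hpos HM.
  set (E := fun v => exists x y (pr : Riemann_integrable f x y), 0 < x /\ x <= y /\ v = RiemannInt pr).
  assert (HE : bound E).
  { exists M. intros v [x [y [pr [A [B D]]]]]. subst; auto. }
  assert (HE2 : exists v, E v).
  { destruct (Hint 1 1) as [pr]; try lra.
    exists (RiemannInt pr), 1, 1, pr. repeat split; lra. }
  destruct (completeness E HE HE2) as [l [Hub Hlub]].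
  exists l. split; [|apply Hlub; intros v [x [y [pr [A [B D]]]]]; subst; apply HM; assumption].
  split; [auto|].
  intros eps Heps.
  destruct (classic (exists v, E v /\ l - eps < v)) as [[v [[x0 [y0 [pr0 [A [B D]]]]] Hv]]|Hn].
  - exists x0. split; [lra|]. exists y0.
    intros x y pr Hx1 Hx2 Hy Hxy.
    assert (W : RiemannInt pr0 <= RiemannInt pr).
    { apply RI_widen; try lra. apply Hint; lra. apply Hint; lra.
      intros; apply Hpos; lra. }
    assert (U : RiemannInt pr <= l) by (apply Hub; exists x, y, pr; repeat split; lra).
    rewrite Rabs_left1; lra.
  - exfalso. assert (l <= l - eps); [|lra].
    apply Hlub. intros v Ev. destruct (Rle_lt_dec v (l - eps)); auto.
    exfalso; apply Hn; exists v; auto.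
Qed.

Lemma imp_ab_upper : forall f a b l, (forall x, a < x < b -> 0 <= f x) -> imp_int_ab f a b l ->
  forall x y (pr : Riemann_integrable f x y), a < x -> x <= y -> y < b -> RiemannInt pr <= l.
Proof.
  intros f a b l Hpos [Hab [Hint Hl]] x y pr Hx Hxy Hy.
  destruct (Rle_lt_dec (RiemannInt pr) l) as [|Hc]; auto. exfalso.
  destruct (Hl (RiemannInt pr - l)) as [del [Hdel Hd]]; [lra|].
  set (x' := Rmin x (a + del/2)). set (y' := Rmax y (b - del/2)).
  assert (Hx1 := Rmin_l x (a + del/2)). assert (Hx2 := Rmin_r x (a + del/2)).
  assert (Hy1 := Rmax_l y (b - del/2)). assert (Hy2 := Rmax_r y (b - del/2)).
  assert (Hx3 : a < x') by (unfold x', Rmin; destruct Rle_dec; lra).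
  assert (Hy3 : y' < b) by (unfold y', Rmax; destruct Rle_dec; lra).
  fold x' y' in Hx1, Hx2, Hy1, Hy2.
  destruct (Hint x' y') as [pr']; try lra.
  assert (W : RiemannInt pr <= RiemannInt pr').
  { apply RI_widen; try lra. apply Hint; lra. apply Hint; lra. intros; apply Hpos; lra. }
  assert (X := Hd x' y' pr' Hx3 ltac:(lra) ltac:(lra) Hy3 ltac:(lra)).
  apply Rabs_def2 in X. lra.
Qed.

Lemma imp_0inf_upper : forall f l, (forall x, 0 < x -> 0 <= f x) -> imp_int_0inf f l ->
  forall x y (pr : Riemann_integrable f x y), 0 < x -> x <= y -> RiemannInt pr <= l.
Proof.
  intros f l Hpos [Hint Hl] x y pr Hx Hxy.
  destruct (Rle_lt_dec (RiemannInt pr) l) as [|Hc]; auto. exfalso.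
  destruct (Hl (RiemannInt pr - l)) as [del [Hdel [M Hd]]]; [lra|].
  set (x' := Rmin x (del/2)). set (y' := Rmax y (M + 1)).
  assert (Hx1 := Rmin_l x (del/2)). assert (Hx2 := Rmin_r x (del/2)).
  assert (Hy1 := Rmax_l y (M+1)). assert (Hy2 := Rmax_r y (M+1)).
  assert (Hx3 : 0 < x') by (unfold x', Rmin; destruct Rle_dec; lra).
  fold x' y' in Hx1, Hx2, Hy1, Hy2.
  destruct (Hint x' y') as [pr']; try lra.
  assert (W : RiemannInt pr <= RiemannInt pr').
  { apply RI_widen; try lra. apply Hint; lra. apply Hint; lra. intros; apply Hpos; lra. }
  assert (X := Hd x' y' pr' Hx3 ltac:(lra) ltac:(lra) ltac:(lra)).
  apply Rabs_def2 in X. lra.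
Qed.

Lemma imp_0inf_nonneg : forall f l, (forall x, 0 < x -> 0 <= f x) -> imp_int_0inf f l -> 0 <= l.
Proof.
  intros f l Hpos Hl. destruct (proj1 Hl 1 1) as [pr]; try lra.
  eapply Rle_trans; [|apply (imp_0inf_upper f l Hpos Hl 1 1 pr); lra].
  apply RI_nonneg; [lra|]. intros; apply Hpos; lra.
Qed.

Lemma imp_0inf_cmp : forall f g c lf lg, 0 <= c ->
  (forall s, 0 < s -> f s <= c * g s) -> (forall s, 0 < s -> 0 <= g s) ->
  imp_int_0inf f lf -> imp_int_0inf g lg -> lf <= c * lg.
Proof.
  intros f g c lf lg Hc H Hg Hf Hgl.
  apply Rnot_lt_le; intro Hlt.
  destruct (proj2 Hf (lf - c * lg)) as [del [Hdel [M Hd]]]; [lra|].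
  set (x := del / 2). set (y := Rmax x (M + 1)).
  assert (Hy1 := Rmax_l x (M+1)). assert (Hy2 := Rmax_r x (M+1)). fold y in Hy1, Hy2.
  destruct (proj1 Hf x y) as [prf]; unfold x in *; try lra.
  destruct (proj1 Hgl x y) as [prg]; unfold x in *; try lra.
  assert (X := Hd _ _ prf ltac:(lra) ltac:(lra) ltac:(lra) ltac:(lra)).
  apply Rabs_def2 in X.
  assert (Y : RiemannInt prf <= c * RiemannInt prg).
  { apply RI_scal_le; [lra|]. intros; apply H; lra. }
  assert (Z := imp_0inf_upper g lg Hg Hgl _ _ prg ltac:(lra) ltac:(lra)).
  assert (c * RiemannInt prg <= c * lg) by (apply Rmult_le_compat_l; auto).
  lra.
Qed.


Lemma D1 : forall p s, p <> 0 -> 0 < s -> is_derive (fun u => / p * Rpower u p) s (Rpower s (p - 1)).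
Proof.
  intros p s Hp Hs.
  replace (Rpower s (p - 1)) with (/ p * (p * Rpower s (p - 1))) by (field; auto).
  apply is_derive_scal. apply is_derive_Reals. apply derivable_pt_lim_power; auto.
Qed.

Lemma D2 : forall q s, q <> 0 -> s < 1 -> is_derive (fun u => - / q * Rpower (1 - u) q) s (Rpower (1 - s) (q - 1)).
Proof.
  intros q s Hq Hs.
  replace (Rpower (1 - s) (q - 1)) with (- / q * ((q * Rpower (1 - s) (q - 1)) * (-1))) by (field; auto).
  apply is_derive_scal. apply is_derive_Reals.
  apply (derivable_pt_lim_comp (fun u => 1 - u) (fun v => Rpower v q)).
  - replace (-1) with (0 - 1) by ring. apply derivable_pt_lim_minus.
    apply derivable_pt_lim_const. apply derivable_pt_lim_id.
  - apply derivable_pt_lim_power; lra.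
Qed.

Lemma C1 : forall c s, 0 < s -> continuous (fun u => Rpower u c) s.
Proof.
  intros c s Hs. apply continuity_pt_filterlim. apply derivable_continuous_pt.
  exists (c * Rpower s (c - 1)). apply derivable_pt_lim_power; auto.
Qed.

Lemma C2 : forall c s, s < 1 -> continuous (fun u => Rpower (1 - u) c) s.
Proof.
  intros c s Hs. apply continuity_pt_filterlim. apply derivable_continuous_pt.
  exists (c * Rpower (1 - s) (c - 1) * (-1)).
  apply (derivable_pt_lim_comp (fun u => 1 - u) (fun v => Rpower v c)).
  - replace (-1) with (0 - 1) by ring. apply derivable_pt_lim_minus.
    apply derivable_pt_lim_const. apply derivable_pt_lim_id.
  - apply derivable_pt_lim_power; lra.
Qed.

Lemma I1 : forall p x y, 0 < p -> 0 < x -> x <= y ->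
  RInt (fun s => Rpower s (p - 1)) x y = / p * Rpower y p - / p * Rpower x p.
Proof.
  intros p x y Hp Hx Hxy. apply is_RInt_unique.
  assert (Hm : Rmin x y = x) by (unfold Rmin; destruct Rle_dec; lra).
  apply (is_RInt_derive (fun u => / p * Rpower u p)).
  - intros z Hz. rewrite Hm in Hz. apply D1; lra.
  - intros z Hz. rewrite Hm in Hz. apply C1; lra.
Qed.

Lemma I2 : forall q x y, 0 < q -> x <= y -> y < 1 ->
  RInt (fun s => Rpower (1 - s) (q - 1)) x y = - / q * Rpower (1 - y) q - (- / q * Rpower (1 - x) q).
Proof.
  intros q x y Hq Hxy Hy. apply is_RInt_unique.
  assert (HM : Rmax x y = y) by (unfold Rmax; destruct Rle_dec; lra).
  apply (is_RInt_derive (fun u => - / q * Rpower (1 - u) q)).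
  - intros z Hz. rewrite HM in Hz. apply D2; lra.
  - intros z Hz. rewrite HM in Hz. apply C2; lra.
Qed.

Definition Bf (p q : R) : R -> R := fun s => Rpower s (p - 1) * Rpower (1 - s) (q - 1).

Lemma tame_pow_l : forall c x y, 0 < x -> x <= y -> tame (fun s => Rpower s c) x y.
Proof.
  intros c x y Hx Hxy. unfold Rpower. apply (tame_exp ln c x y Hxy).
  intros s u Hs Hsu Hu. apply ln_le; lra.
Qed.

Lemma tame_pow_r : forall c t x y, x <= y -> y < t -> tame (fun s => Rpower (t - s) c) x y.
Proof.
  intros c t x y Hxy Hy.
  apply (tame_ext (fun s => exp (- c * (fun s => - ln (t - s)) s))).
  - apply tame_exp; auto. intros s u Hs Hsu Hu. assert (ln (t - u) <= ln (t - s)) by (apply ln_le; lra). lra.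
  - intros s Hs. unfold Rpower. f_equal. ring.
Qed.

Lemma RInt_plus_R : forall f g a b, ex_RInt f a b -> ex_RInt g a b ->
  RInt (fun x => f x + g x) a b = RInt f a b + RInt g a b.
Proof. intros. apply (RInt_plus (V := R_CompleteNormedModule)); auto. Qed.

Lemma ex_RInt_plus_R : forall f g a b, ex_RInt f a b -> ex_RInt g a b ->
  ex_RInt (fun x => f x + g x) a b.
Proof. intros. apply (ex_RInt_plus (V := R_NormedModule)); auto. Qed.

Lemma tame_exRInt : forall f x y, x <= y -> tame f x y -> ex_RInt f x y.
Proof. intros f x y H T. destruct (tame_RI f x y H T) as [pr]. apply ex_RInt_Reals_1; auto. Qed.

Lemma Rpower_pos : forall x c, 0 < Rpower x c.
Proof. intros; unfold Rpower; apply exp_pos. Qed.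

Lemma Rpower_le1 : forall x c, 0 < x -> x <= 1 -> 0 <= c -> Rpower x c <= 1.
Proof.
  intros x c Hx Hx1 Hc. unfold Rpower. rewrite <- exp_0. apply exp_le_mono.
  assert (ln x <= 0) by (rewrite <- ln_1; apply ln_le; lra). nra.
Qed.

Lemma Rpower_half_bound : forall z c, /2 <= z -> z < 1 ->
  Rpower z c <= exp (Rmax 0 (c * ln (/2))).
Proof.
  intros z c Hz Hz1. unfold Rpower. apply exp_le_mono.
  assert (A : ln (/2) <= ln z) by (apply ln_le; lra).
  assert (B : ln z <= 0) by (rewrite <- ln_1; apply ln_le; lra).
  assert (M1 := Rmax_l 0 (c * ln (/2))). assert (M2 := Rmax_r 0 (c * ln (/2))).
  destruct (Rle_lt_dec 0 c); nra.
Qed.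

Lemma Beta_bound : forall p q x y (pr : Riemann_integrable (Bf p q) x y), 0 < p -> 0 < q ->
  0 < x -> x <= y -> y < 1 ->
  RiemannInt pr <= exp (Rmax 0 ((q - 1) * ln (/2))) / p + exp (Rmax 0 ((p - 1) * ln (/2))) / q.
Proof.
  intros p q x y pr Hp Hq Hx Hxy Hy.
  set (K2 := exp (Rmax 0 ((q - 1) * ln (/2)))). set (K1 := exp (Rmax 0 ((p - 1) * ln (/2)))).
  assert (HK1 : 0 < K1) by apply exp_pos. assert (HK2 : 0 < K2) by apply exp_pos.
  rewrite <- (RInt_Reals _ _ _ pr).
  assert (E1 : ex_RInt (fun s => Rpower s (p - 1)) x y) by (apply tame_exRInt; auto; apply tame_pow_l; lra).
  assert (E2 : ex_RInt (fun s => Rpower (1 - s) (q - 1)) x y) by (apply tame_exRInt; auto; apply tame_pow_r; lra).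
  assert (E1' := ex_RInt_scal_R _ _ _ K2 E1). assert (E2' := ex_RInt_scal_R _ _ _ K1 E2).
  apply Rle_trans with (RInt (fun s => K2 * Rpower s (p - 1) + K1 * Rpower (1 - s) (q - 1)) x y).
  - apply RInt_le; auto. apply ex_RInt_Reals_1; auto. apply ex_RInt_plus_R; auto.
    intros s Hs. unfold Bf.
    assert (P1 := Rpower_pos s (p - 1)). assert (P2 := Rpower_pos (1 - s) (q - 1)).
    destruct (Rle_lt_dec s (/2)).
    + assert (Rpower (1 - s) (q - 1) <= K2) by (apply Rpower_half_bound; lra).
      assert (Rpower s (p - 1) * Rpower (1 - s) (q - 1) <= Rpower s (p - 1) * K2) by (apply Rmult_le_compat_l; lra).
      nra.
    + assert (Rpower s (p - 1) <= K1) by (apply Rpower_half_bound; lra).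
      assert (Rpower s (p - 1) * Rpower (1 - s) (q - 1) <= K1 * Rpower (1 - s) (q - 1)) by (apply Rmult_le_compat_r; lra).
      nra.
  - rewrite RInt_plus_R by auto. rewrite !RInt_scal_R by auto.
    rewrite I1, I2 by lra.
    assert (Rpower y p <= 1) by (apply Rpower_le1; lra).
    assert (Rpower (1 - x) q <= 1) by (apply Rpower_le1; lra).
    assert (0 < Rpower x p) by apply Rpower_pos.
    assert (0 < Rpower (1 - y) q) by apply Rpower_pos.
    assert (0 < / p) by (apply Rinv_0_lt_compat; lra).
    assert (0 < / q) by (apply Rinv_0_lt_compat; lra).
    unfold Rdiv.
    assert (K2 * (/ p * Rpower y p - / p * Rpower x p) <= K2 * / p).
    { apply Rmult_le_compat_l; [lra|]. nra. }
    assert (K1 * (- / q * Rpower (1 - y) q - - / q * Rpower (1 - x) q) <= K1 * / q).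
    { apply Rmult_le_compat_l; [lra|]. nra. }
    lra.
Qed.

Lemma tame_Bf : forall p q x y, 0 < x -> x <= y -> y < 1 -> tame (Bf p q) x y.
Proof.
  intros. unfold Bf. apply tame_mult; auto. apply tame_pow_l; auto. apply tame_pow_r; auto.
Qed.

Lemma Beta_exists : forall p q, 0 < p -> 0 < q -> exists l, imp_int_ab (Bf p q) 0 1 l.
Proof.
  intros p q Hp Hq.
  destruct (imp_ab_exists (Bf p q) 0 1
     (exp (Rmax 0 ((q - 1) * ln (/2))) / p + exp (Rmax 0 ((p - 1) * ln (/2))) / q)) as [l [Hl _]].
  - lra.
  - intros x y Hx Hxy Hy. apply tame_RI; auto. apply tame_Bf; auto.
  - intros x Hx. unfold Bf. left; apply Rmult_lt_0_compat; apply Rpower_pos.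
  - intros x y pr Hx Hxy Hy. apply Beta_bound; auto.
  - exists l; auto.
Qed.

Lemma Beta_spec : forall p q, 0 < p -> 0 < q -> imp_int_ab (Bf p q) 0 1 (Beta p q).
Proof.
  intros p q Hp Hq. unfold Beta. apply epsilon_spec. apply Beta_exists; auto.
Qed.

Lemma Beta_upper : forall p q x y (pr : Riemann_integrable (Bf p q) x y), 0 < p -> 0 < q ->
  0 < x -> x <= y -> y < 1 -> RiemannInt pr <= Beta p q.
Proof.
  intros. apply (imp_ab_upper (Bf p q) 0 1); auto.
  - intros z Hz. unfold Bf. left; apply Rmult_lt_0_compat; apply Rpower_pos.
  - apply Beta_spec; auto.
Qed.

Lemma pw_id : forall t s A B, 0 < t -> 0 < s < 1 ->
  t * (Rpower (t * (1 - s)) A * Rpower (t * s) B) = Rpower t (A + B + 1) * (Rpower s B * Rpower (1 - s) A).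
Proof.
  intros t s A B Ht Hs. unfold Rpower. rewrite !ln_mult by lra.
  replace (exp ((A + B + 1) * ln t)) with (exp (ln t) * exp (A * ln t) * exp (B * ln t))
    by (rewrite <- !exp_plus; f_equal; ring).
  rewrite exp_ln by lra. rewrite !Rmult_plus_distr_l, !exp_plus. ring.
Qed.

Lemma ex_RInt_swap_R : forall (f : R -> R) a b, ex_RInt f a b -> ex_RInt f b a.
Proof. intros. apply (ex_RInt_swap (V := R_NormedModule)); auto. Qed.

Lemma subst_lemma : forall t a b x y, 0 < t -> 0 < x -> x <= y -> y < t ->
  ex_RInt (fun u => Rpower u (a - 1) * Rpower (t - u) (b - 1)) x y ->
  ex_RInt (Bf b a) ((t - y) / t) ((t - x) / t) ->
  RInt (fun u => Rpower u (a - 1) * Rpower (t - u) (b - 1)) x y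
  = Rpower t (a + b - 1) * RInt (Bf b a) ((t - y) / t) ((t - x) / t).
Proof.
  intros t a b x y Ht Hx Hxy Hy Em EB.
  set (m := fun u => Rpower u (a - 1) * Rpower (t - u) (b - 1)).
  set (x' := (t - y) / t). set (y' := (t - x) / t).
  assert (Hx' : 0 < x') by (unfold x'; apply Rdiv_lt_0_compat; lra).
  assert (Hy' : y' < 1) by (unfold y'; apply Rmult_lt_reg_r with t; auto; field_simplify; lra).
  assert (Hxy' : x' <= y') by (unfold x', y'; unfold Rdiv; apply Rmult_le_compat_r; [left; apply Rinv_0_lt_compat; lra | lra]).
  assert (B1 : - t * y' + t = x) by (unfold y'; field; lra).
  assert (B2 : - t * x' + t = y) by (unfold x'; field; lra).
  assert (E : ex_RInt m (- t * y' + t) (- t * x' + t)) by (rewrite B1, B2; exact Em).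
  assert (C := RInt_comp_lin (V := R_CompleteNormedModule) m (- t) t y' x' E).
  rewrite B1, B2 in C. fold m. rewrite <- C.
  assert (EF := ex_RInt_comp_lin (V := R_NormedModule) m (- t) t y' x' E).
  assert (EF' := ex_RInt_swap_R _ _ _ EF).
  transitivity (- (RInt (fun s => scal (- t) (m (- t * s + t))) x' y')).
  { symmetry. apply (opp_RInt_swap (V := R_CompleteNormedModule)). exact EF'. }
  rewrite (RInt_ext (V := R_CompleteNormedModule) _ (fun s => (- Rpower t (a + b - 1)) * Bf b a s)).
  - rewrite RInt_scal_R by auto. match goal with |- ?A = ?B => change (@eq R A B) end; ring.
  - intros s Hs.
    assert (Hm : Rmin x' y' = x') by (unfold Rmin; destruct Rle_dec; lra).
    assert (HM : Rmax x' y' = y') by (unfold Rmax; destruct Rle_dec; lra).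
    rewrite Hm, HM in Hs.
    change (scal (- t) (m (- t * s + t))) with (- t * (m (- t * s + t))).
    unfold m, Bf.
    replace (- t * s + t) with (t * (1 - s)) by ring.
    replace (t - t * (1 - s)) with (t * s) by ring.
    replace (a + b - 1) with ((a - 1) + (b - 1) + 1) by ring.
    rewrite <- !Ropp_mult_distr_l. rewrite pw_id by lra. reflexivity.
Qed.

Lemma conv_lemma : forall f t a b K, 0 < t -> 0 < a -> 0 < b -> 0 <= K ->
  (forall x y, 0 < x -> x <= y -> y < t -> tame f x y) ->
  (forall u, 0 < u < t -> 0 <= f u /\ f u <= K * (Rpower u (a - 1) * Rpower (t - u) (b - 1))) ->
  exists l, imp_int_ab f 0 t l /\ l <= K * Rpower t (a + b - 1) * Beta b a.
Proof.
  intros f t a b K Ht Ha Hb HK Htame Hb2.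
  apply imp_ab_exists; auto.
  - intros x y Hx Hxy Hy. apply tame_RI; auto.
  - intros u Hu. apply Hb2; auto.
  - intros x y pr Hx Hxy Hy.
    set (m := fun u => Rpower u (a - 1) * Rpower (t - u) (b - 1)).
    assert (Tm : tame m x y) by (unfold m; apply tame_mult; auto; [apply tame_pow_l | apply tame_pow_r]; lra).
    destruct (tame_RI m x y Hxy Tm) as [prm].
    assert (S1 : RiemannInt pr <= K * RiemannInt prm).
    { apply RI_scal_le; auto. intros u Hu. apply Hb2; lra. }
    set (x' := (t - y) / t). set (y' := (t - x) / t).
    assert (Hx' : 0 < x') by (unfold x'; apply Rdiv_lt_0_compat; lra).
    assert (Hy' : y' < 1) by (unfold y'; apply Rmult_lt_reg_r with t; auto; field_simplify; lra).
    assert (Hxy' : x' <= y') by (unfold x', y'; unfold Rdiv; apply Rmult_le_compat_r; [left; apply Rinv_0_lt_compat; lra | lra]).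
    destruct (tame_RI (Bf b a) x' y' Hxy' (tame_Bf b a x' y' Hx' Hxy' Hy')) as [prB].
    assert (S2 := subst_lemma t a b x y Ht Hx Hxy Hy (ex_RInt_Reals_1 _ _ _ prm) (ex_RInt_Reals_1 _ _ _ prB)).
    fold m in S2. fold x' y' in S2. rewrite (RInt_Reals _ _ _ prm), (RInt_Reals _ _ _ prB) in S2.
    assert (S3 := Beta_upper b a x' y' prB Hb Ha Hx' Hxy' Hy').
    assert (P := Rpower_pos t (a + b - 1)).
    assert (RiemannInt prm <= Rpower t (a + b - 1) * Beta b a).
    { rewrite S2. apply Rmult_le_compat_l; lra. }
    rewrite Rmult_assoc. eapply Rle_trans; [exact S1|]. apply Rmult_le_compat_l; auto.
Qed.


Definition Hyp (d : nat) (nu : R -> R) : Prop :=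
  (0 < d)%nat /\ (forall s, 0 < s -> 0 <= nu s) /\
  (forall s1 s2, 0 < s1 -> s1 <= s2 -> nu s2 <= nu s1) /\
  (exists l, imp_int_0inf (fun s => Rmin 1 (s ^ 2) * nu s * s ^ (pred d)) l) /\
  (forall M, exists del, 0 < del /\ forall r, 0 < r -> r < del -> M < hfun d nu r).

Definition gr (d : nat) (nu : R -> R) (r : R) : R -> R :=
  fun s => Rmin 1 (s ^ 2 / r ^ 2) * nu s * s ^ (pred d).
Definition g1 (d : nat) (nu : R -> R) : R -> R :=
  fun s => Rmin 1 (s ^ 2) * nu s * s ^ (pred d).
Definition Ir (d : nat) (nu : R -> R) (r : R) : R :=
  epsilon (inhabits 0) (fun l => imp_int_0inf (gr d nu r) l).

Lemma hfun_Ir : forall d nu r, hfun d nu r = sphere_area d * Ir d nu r.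
Proof. reflexivity. Qed.

Lemma ball_vol_pos : forall k, 0 < ball_vol k.
Proof.
  assert (H : forall k, 0 < ball_vol k /\ 0 < ball_vol (S k)).
  { induction k as [|k [IH1 IH2]].
    - simpl; lra.
    - split; auto. change (ball_vol (S (S k))) with (2 * PI / INR (S (S k)) * ball_vol k).
      apply Rmult_lt_0_compat; auto. apply Rdiv_lt_0_compat.
      assert (PI_RGT_0 := PI_RGT_0); lra. apply lt_0_INR; lia. }
  intros k; apply H.
Qed.

Lemma sphere_pos : forall d, (0 < d)%nat -> 0 < sphere_area d.
Proof.
  intros d Hd. unfold sphere_area. apply Rmult_lt_0_compat.
  apply lt_0_INR; auto. apply ball_vol_pos.
Qed.

Lemma pow_nonneg_incr : forall n s u, 0 <= s -> s <= u -> s ^ n <= u ^ n.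
Proof. intros. apply pow_incr; lra. Qed.

Lemma tame_gr : forall d nu r x y, Hyp d nu -> 0 < r -> 0 < x -> x <= y -> tame (gr d nu r) x y.
Proof.
  intros d nu r x y [Hd [Hnu0 [Hnu _]]] Hr Hx Hxy. unfold gr.
  apply tame_mult; auto. apply tame_mult; auto.
  - apply tame_incr; auto. intros s u Hs Hsu Hu.
    apply Rle_min_compat_l. unfold Rdiv. apply Rmult_le_compat_r.
    left; apply Rinv_0_lt_compat; apply pow_lt; auto.
    apply pow_nonneg_incr; lra.
  - apply tame_decr; auto. intros s u Hs Hsu Hu. apply Hnu; lra.
  - apply tame_incr; auto. intros s u Hs Hsu Hu. apply pow_nonneg_incr; lra.
Qed.

Lemma tame_g1 : forall d nu x y, Hyp d nu -> 0 < x -> x <= y -> tame (g1 d nu) x y.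
Proof.
  intros d nu x y H Hx Hxy. apply (tame_ext (gr d nu 1)). apply tame_gr; auto; lra.
  intros s Hs. unfold gr, g1. f_equal. f_equal. f_equal. field.
Qed.

Lemma gr_nonneg : forall d nu r s, Hyp d nu -> 0 < r -> 0 < s -> 0 <= gr d nu r s.
Proof.
  intros d nu r s [Hd [Hnu0 _]] Hr Hs. unfold gr.
  apply Rmult_le_pos; [apply Rmult_le_pos|].
  - apply Rmin_glb. lra. unfold Rdiv; apply Rmult_le_pos. apply pow_le; lra.
    left; apply Rinv_0_lt_compat; apply pow_lt; auto.
  - apply Hnu0; auto.
  - apply pow_le; lra.
Qed.

Lemma g1_nonneg : forall d nu s, Hyp d nu -> 0 < s -> 0 <= g1 d nu s.
Proof.
  intros d nu s [Hd [Hnu0 _]] Hs. unfold g1.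
  apply Rmult_le_pos; [apply Rmult_le_pos|].
  - apply Rmin_glb. lra. apply pow_le; lra.
  - apply Hnu0; auto.
  - apply pow_le; lra.
Qed.

Lemma min_scale : forall k u, 1 <= k -> 0 <= u -> Rmin 1 (k * u) <= k * Rmin 1 u.
Proof.
  intros k u Hk Hu. unfold Rmin at 2. destruct (Rle_dec 1 u).
  - eapply Rle_trans; [apply Rmin_l|]. lra.
  - eapply Rle_trans; [apply Rmin_r|]. lra.
Qed.

Lemma gr_le_scale : forall d nu r r' s, Hyp d nu -> 0 < r -> r <= r' -> 0 < s ->
  gr d nu r s <= (r' / r) ^ 2 * gr d nu r' s.
Proof.
  intros d nu r r' s H Hr Hrr Hs. destruct H as [Hd [Hnu0 _]].
  unfold gr.
  assert (E : s ^ 2 / r ^ 2 = (r' / r) ^ 2 * (s ^ 2 / r' ^ 2)) by (field; lra).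
  rewrite E.
  assert (Hk : 1 <= (r' / r) ^ 2).
  { assert (1 <= r' / r) by (apply Rmult_le_reg_r with r; auto; field_simplify; lra). nra. }
  assert (M := min_scale ((r' / r) ^ 2) (s ^ 2 / r' ^ 2) Hk).
  assert (0 <= s ^ 2 / r' ^ 2).
  { unfold Rdiv; apply Rmult_le_pos. apply pow_le; lra. left; apply Rinv_0_lt_compat; apply pow_lt; lra. }
  assert (0 <= nu s * s ^ pred d) by (apply Rmult_le_pos; [apply Hnu0; auto | apply pow_le; lra]).
  rewrite !Rmult_assoc. rewrite <- (Rmult_assoc ((r'/r)^2)).
  apply Rmult_le_compat_r; auto.
Qed.

Lemma gr_mono : forall d nu r r' s, Hyp d nu -> 0 < r -> r <= r' -> 0 < s ->
  gr d nu r' s <= 1 * gr d nu r s.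
Proof.
  intros d nu r r' s H Hr Hrr Hs. destruct H as [Hd [Hnu0 _]].
  unfold gr. rewrite Rmult_1_l.
  assert (0 <= nu s * s ^ pred d) by (apply Rmult_le_pos; [apply Hnu0; auto | apply pow_le; lra]).
  rewrite !Rmult_assoc. apply Rmult_le_compat_r; auto.
  apply Rle_min_compat_l. unfold Rdiv. apply Rmult_le_compat_l. apply pow_le; lra.
  apply Rinv_le_contravar. apply pow_lt; auto. apply pow_incr; lra.
Qed.

Lemma gr_le_g1 : forall d nu r s, Hyp d nu -> 0 < r -> 0 < s ->
  gr d nu r s <= Rmax 1 (/ r ^ 2) * g1 d nu s.
Proof.
  intros d nu r s H Hr Hs. destruct H as [Hd [Hnu0 _]]. unfold gr, g1.
  assert (0 <= nu s * s ^ pred d) by (apply Rmult_le_pos; [apply Hnu0; auto | apply pow_le; lra]).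
  rewrite !Rmult_assoc. rewrite <- (Rmult_assoc (Rmax _ _)).
  apply Rmult_le_compat_r; auto.
  assert (M1 := Rmax_l 1 (/ r ^ 2)). assert (M2 := Rmax_r 1 (/ r ^ 2)).
  assert (Hs2 : 0 <= s ^ 2) by (apply pow_le; lra).
  unfold Rmin at 2. destruct (Rle_dec 1 (s ^ 2)).
  - eapply Rle_trans; [apply Rmin_l|]. lra.
  - eapply Rle_trans; [apply Rmin_r|]. unfold Rdiv. rewrite Rmult_comm.
    apply Rmult_le_compat_r; lra.
Qed.

Lemma Hyp_L1 : forall d nu, Hyp d nu -> exists L1, imp_int_0inf (g1 d nu) L1.
Proof. intros d nu H. destruct H as [_ [_ [_ [[l Hl] _]]]]. exists l. exact Hl. Qed.

Lemma Ir_spec : forall d nu r, Hyp d nu -> 0 < r -> imp_int_0inf (gr d nu r) (Ir d nu r).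
Proof.
  intros d nu r H Hr. unfold Ir. apply epsilon_spec.
  destruct (Hyp_L1 d nu H) as [L1 HL1].
  destruct (imp_0inf_exists (gr d nu r) (Rmax 1 (/ r ^ 2) * L1)) as [l [Hl _]].
  - intros x y Hx Hxy. apply tame_RI; auto. apply tame_gr; auto.
  - intros x Hx. apply gr_nonneg; auto.
  - intros x y pr Hx Hxy. destruct (tame_RI (g1 d nu) x y Hxy (tame_g1 d nu x y H Hx Hxy)) as [pr1].
    eapply Rle_trans. apply (RI_scal_le _ _ _ _ (Rmax 1 (/ r ^ 2)) pr pr1 Hxy). intros s Hs; apply gr_le_g1; auto; lra.
    apply Rmult_le_compat_l. eapply Rle_trans; [|apply Rmax_l]; lra.
    apply (imp_0inf_upper (g1 d nu)); auto. intros; apply g1_nonneg; auto.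
  - exists l; auto.
Qed.

Lemma Ir_nonneg : forall d nu r, Hyp d nu -> 0 < r -> 0 <= Ir d nu r.
Proof.
  intros. apply (imp_0inf_nonneg (gr d nu r)). intros; apply gr_nonneg; auto. apply Ir_spec; auto.
Qed.

Lemma Ir_mono : forall d nu r r', Hyp d nu -> 0 < r -> r <= r' -> Ir d nu r' <= Ir d nu r.
Proof.
  intros d nu r r' H Hr Hrr. rewrite <- (Rmult_1_l (Ir d nu r)).
  apply (imp_0inf_cmp (gr d nu r') (gr d nu r)); try lra.
  intros; apply gr_mono; auto. intros; apply gr_nonneg; auto.
  apply Ir_spec; [auto|lra]. apply Ir_spec; [auto|lra].
Qed.

Lemma Ir_scale : forall d nu r r', Hyp d nu -> 0 < r -> r <= r' -> (r / r') ^ 2 * Ir d nu r <= Ir d nu r'.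
Proof.
  intros d nu r r' H Hr Hrr.
  assert (X : Ir d nu r <= (r' / r) ^ 2 * Ir d nu r').
  { apply (imp_0inf_cmp (gr d nu r) (gr d nu r')).
    apply pow_le. unfold Rdiv; apply Rmult_le_pos; [lra| left; apply Rinv_0_lt_compat; lra].
    intros; apply gr_le_scale; auto. intros; apply gr_nonneg; auto; lra.
    apply Ir_spec; [auto|lra]. apply Ir_spec; [auto|lra]. }
  assert (P : 0 <= (r / r') ^ 2) by (apply pow_le; unfold Rdiv; apply Rmult_le_pos; [lra| left; apply Rinv_0_lt_compat; lra]).
  apply Rmult_le_compat_l with (r := (r / r') ^ 2) in X; auto.
  replace ((r / r') ^ 2 * ((r' / r) ^ 2 * Ir d nu r')) with (Ir d nu r') in X; auto.
  field; lra.
Qed.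

Lemma gr_le_tail1 : forall d nu r A s, Hyp d nu -> 0 < r -> 1 <= A -> 0 < s -> s <= A ->
  gr d nu r s <= (A ^ 2 / r ^ 2) * g1 d nu s.
Proof.
  intros d nu r A s H Hr HA Hs HsA. destruct H as [Hd [Hnu0 _]]. unfold gr, g1.
  assert (0 <= nu s * s ^ pred d) by (apply Rmult_le_pos; [apply Hnu0; auto | apply pow_le; lra]).
  rewrite !Rmult_assoc. rewrite <- (Rmult_assoc (A ^ 2 / r ^ 2)).
  apply Rmult_le_compat_r; auto.
  assert (Hr2 : 0 < / r ^ 2) by (apply Rinv_0_lt_compat; apply pow_lt; auto).
  assert (Hs2 : s ^ 2 <= A ^ 2) by (apply pow_incr; lra).
  assert (HA2 : 1 <= A ^ 2) by nra.
  eapply Rle_trans; [apply Rmin_r|]. unfold Rdiv.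
  unfold Rmin. destruct (Rle_dec 1 (s ^ 2)).
  - assert (s ^ 2 * / r ^ 2 <= A ^ 2 * / r ^ 2) by (apply Rmult_le_compat_r; lra). lra.
  - assert (0 <= s ^ 2) by (apply pow_le; lra).
    assert (0 <= (A ^ 2 - 1) * (s ^ 2 * / r ^ 2)) by (apply Rmult_le_pos; [lra | apply Rmult_le_pos; lra]).
    lra.
Qed.

Lemma gr_le_tail2 : forall d nu r s, Hyp d nu -> 1 <= s -> gr d nu r s <= 1 * g1 d nu s.
Proof.
  intros d nu r s H Hs. destruct H as [Hd [Hnu0 _]]. unfold gr, g1. rewrite Rmult_1_l.
  assert (0 <= nu s * s ^ pred d) by (apply Rmult_le_pos; [apply Hnu0; lra | apply pow_le; lra]).
  rewrite !Rmult_assoc. apply Rmult_le_compat_r; auto.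
  assert (1 <= s ^ 2) by nra.
  rewrite (Rmin_left 1 (s ^ 2)) by lra. apply Rmin_l.
Qed.

Lemma Ir_small : forall d nu, Hyp d nu -> forall eps, 0 < eps -> exists r, 0 < r /\ Ir d nu r < 4 * eps.
Proof.
  intros d nu H eps Heps.
  destruct (Hyp_L1 d nu H) as [L1 HL1].
  assert (HL0 : 0 <= L1) by (apply (imp_0inf_nonneg (g1 d nu)); auto; intros; apply g1_nonneg; auto).
  destruct (proj2 HL1 eps Heps) as [del1 [Hdel1 [M1 HM1]]].
  set (A := Rmax 1 (M1 + 1)).
  assert (HA1 : 1 <= A) by apply Rmax_l. assert (HA2 : M1 + 1 <= A) by apply Rmax_r.
  set (z := (L1 + 1) / eps).
  assert (Hz : 0 < z) by (unfold z; apply Rdiv_lt_0_compat; lra).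
  set (r := A * (1 + z)).
  assert (Hr : 0 < r) by (unfold r; apply Rmult_lt_0_compat; lra).
  assert (Q : A ^ 2 / r ^ 2 * L1 < eps).
  { assert (E : A ^ 2 / r ^ 2 = / (1 + z) ^ 2) by (unfold r; field; lra).
    rewrite E. assert (P : 0 < (1 + z) ^ 2) by (apply pow_lt; lra).
    apply (Rmult_lt_reg_r ((1 + z) ^ 2)); auto.
    replace (/ (1 + z) ^ 2 * L1 * (1 + z) ^ 2) with L1 by (field; lra).
    assert (Ez : eps * z = L1 + 1) by (unfold z; field; lra).
    nra. }
  exists r. split; auto.
  destruct (proj2 (Ir_spec d nu r H Hr) eps Heps) as [del2 [Hdel2 [M2 HM2]]].
  set (x := Rmin (Rmin del1 del2) 1 / 2).
  assert (Hm1 := Rmin_l (Rmin del1 del2) 1). assert (Hm2 := Rmin_r (Rmin del1 del2) 1).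
  assert (Hm3 := Rmin_l del1 del2). assert (Hm4 := Rmin_r del1 del2).
  assert (Hx : 0 < x) by (unfold x; apply Rdiv_lt_0_compat; [repeat apply Rmin_pos; lra | lra]).
  assert (Hx1 : x < del1) by (unfold x; lra). assert (Hx2 : x < del2) by (unfold x; lra).
  assert (Hx3 : x < A) by (unfold x; lra).
  set (y := Rmax (M2 + 1) (A + 1)).
  assert (Hy1 := Rmax_l (M2 + 1) (A + 1)). assert (Hy2 := Rmax_r (M2 + 1) (A + 1)). fold y in Hy1, Hy2.
  destruct (tame_RI (gr d nu r) x y ltac:(lra) (tame_gr d nu r x y H Hr Hx ltac:(lra))) as [pxy].
  destruct (tame_RI (gr d nu r) x A ltac:(lra) (tame_gr d nu r x A H Hr Hx ltac:(lra))) as [pxA].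
  destruct (tame_RI (gr d nu r) A y ltac:(lra) (tame_gr d nu r A y H Hr ltac:(lra) ltac:(lra))) as [pAy].
  destruct (tame_RI (g1 d nu) x y ltac:(lra) (tame_g1 d nu x y H Hx ltac:(lra))) as [qxy].
  destruct (tame_RI (g1 d nu) x A ltac:(lra) (tame_g1 d nu x A H Hx ltac:(lra))) as [qxA].
  destruct (tame_RI (g1 d nu) A y ltac:(lra) (tame_g1 d nu A y H ltac:(lra) ltac:(lra))) as [qAy].
  assert (E1 := HM2 x y pxy Hx Hx2 ltac:(lra) ltac:(lra)). apply Rabs_def2 in E1.
  assert (E2 := HM1 x y qxy Hx Hx1 ltac:(lra) ltac:(lra)). apply Rabs_def2 in E2.
  assert (E3 := HM1 x A qxA Hx Hx1 ltac:(lra) ltac:(lra)). apply Rabs_def2 in E3.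
  assert (C1 := RiemannInt_P26 pxA pAy pxy).
  assert (C2 := RiemannInt_P26 qxA qAy qxy).
  assert (S1 : RiemannInt pxA <= (A ^ 2 / r ^ 2) * RiemannInt qxA).
  { apply RI_scal_le; [lra|]. intros s Hs. apply gr_le_tail1; auto; lra. }
  assert (S2 : RiemannInt qxA <= L1).
  { apply (imp_0inf_upper (g1 d nu)); auto; try lra. intros; apply g1_nonneg; auto. }
  assert (S3 : RiemannInt pAy <= 1 * RiemannInt qAy).
  { apply RI_scal_le; [lra|]. intros s Hs. apply gr_le_tail2; auto; lra. }
  assert (P : 0 <= A ^ 2 / r ^ 2).
  { unfold Rdiv; apply Rmult_le_pos. apply pow_le; lra. left; apply Rinv_0_lt_compat; apply pow_lt; auto. }
  assert (A ^ 2 / r ^ 2 * RiemannInt qxA <= A ^ 2 / r ^ 2 * L1) by (apply Rmult_le_compat_l; auto).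
  lra.
Qed.

Lemma HF_mono : forall d nu r r', Hyp d nu -> 0 < r -> r <= r' -> hfun d nu r' <= hfun d nu r.
Proof.
  intros d nu r r' H Hr Hrr. rewrite !hfun_Ir. apply Rmult_le_compat_l.
  left; apply sphere_pos; apply H. apply Ir_mono; auto.
Qed.

Lemma HF_scale : forall d nu r r', Hyp d nu -> 0 < r -> r <= r' ->
  (r / r') ^ 2 * hfun d nu r <= hfun d nu r'.
Proof.
  intros d nu r r' H Hr Hrr. rewrite !hfun_Ir.
  assert (S := sphere_pos d (proj1 H)).
  assert (X := Ir_scale d nu r r' H Hr Hrr).
  rewrite Rmult_comm, Rmult_assoc. apply Rmult_le_compat_l; [lra|]. rewrite Rmult_comm; auto.
Qed.

Lemma HF_nonneg : forall d nu r, Hyp d nu -> 0 < r -> 0 <= hfun d nu r.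
Proof.
  intros. rewrite hfun_Ir. apply Rmult_le_pos. left; apply sphere_pos; apply H. apply Ir_nonneg; auto.
Qed.

Lemma HF_small : forall d nu, Hyp d nu -> forall y, 0 < y -> exists R, 0 < R /\ hfun d nu R < y.
Proof.
  intros d nu H y Hy. assert (S := sphere_pos d (proj1 H)).
  destruct (Ir_small d nu H (y / (4 * sphere_area d))) as [R [HR HI]].
  apply Rdiv_lt_0_compat; lra.
  exists R; split; auto. rewrite hfun_Ir.
  apply Rmult_lt_compat_l with (r := sphere_area d) in HI; auto.
  replace (sphere_area d * (4 * (y / (4 * sphere_area d)))) with y in HI by (field; lra). exact HI.
Qed.

Lemma HF_lip : forall d nu r1 r r' R, Hyp d nu -> 0 < r1 -> r1 <= r -> r <= r' -> r' <= R ->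
  hfun d nu r - hfun d nu r' <= (2 * R / r1 ^ 2 * hfun d nu r1) * (r' - r).
Proof.
  intros d nu r1 r r' R H H1 H2 H3 H4.
  assert (X := HF_scale d nu r r' H ltac:(lra) H3).
  assert (M := HF_mono d nu r1 r H H1 H2).
  assert (N := HF_nonneg d nu r H ltac:(lra)).
  assert (E : hfun d nu r - (r / r') ^ 2 * hfun d nu r = hfun d nu r * ((r' - r) * ((r' + r) / r' ^ 2))) by (field; lra).
  assert (Q : (r' + r) / r' ^ 2 <= 2 * R / r1 ^ 2).
  { unfold Rdiv. apply Rmult_le_compat. lra. left; apply Rinv_0_lt_compat, pow_lt; lra. lra.
    apply Rinv_le_contravar. apply pow_lt; lra. apply pow_incr; lra. }
  assert (Q2 : 0 <= (r' + r) / r' ^ 2) by (unfold Rdiv; apply Rmult_le_pos; [lra| left; apply Rinv_0_lt_compat, pow_lt; lra]).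
  assert (hfun d nu r * ((r' - r) * ((r' + r) / r' ^ 2)) <= hfun d nu r1 * ((r' - r) * (2 * R / r1 ^ 2))).
  { apply Rmult_le_compat; auto. apply Rmult_le_pos; lra. apply Rmult_le_compat_l; lra. }
  assert (E2 : hfun d nu r1 * ((r' - r) * (2 * R / r1 ^ 2)) = 2 * R / r1 ^ 2 * hfun d nu r1 * (r' - r)) by ring.
  lra.
Qed.

Lemma lip_cont : forall f K, 0 <= K -> (forall a b, Rabs (f a - f b) <= K * Rabs (a - b)) -> continuity f.
Proof.
  intros f K HK Hl x. unfold continuity_pt, continue_in, limit1_in, limit_in.
  intros eps Heps. exists (eps / (K + 1)). split.
  apply Rdiv_lt_0_compat; lra.
  intros z [_ Hz]. simpl in *. unfold R_dist in *.
  eapply Rle_lt_trans; [apply Hl|].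
  apply Rle_lt_trans with ((K + 1) * Rabs (z - x)).
  assert (0 <= Rabs (z - x)) by apply Rabs_pos. nra.
  apply (Rmult_lt_compat_l (K + 1)) in Hz; [|lra].
  replace ((K + 1) * (eps / (K + 1))) with eps in Hz by (field; lra). exact Hz.
Qed.

Lemma clamp_lip : forall r1 R a b, r1 <= R ->
  Rabs (Rmax r1 (Rmin R a) - Rmax r1 (Rmin R b)) <= Rabs (a - b).
Proof.
  intros r1 R a b H. unfold Rmax, Rmin.
  repeat (destruct Rle_dec); unfold Rabs; repeat destruct Rcase_abs; lra.
Qed.

Lemma HF_surj : forall d nu, Hyp d nu -> forall y, 0 < y -> exists r, 0 < r /\ hfun d nu r = y.
Proof.
  intros d nu H y Hy.
  destruct (proj2 (proj2 (proj2 (proj2 H))) y) as [del [Hdel Hbig]].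
  set (r1 := del / 2).
  assert (Hr1 : 0 < r1) by (unfold r1; lra).
  assert (Hh1 : y < hfun d nu r1) by (apply Hbig; unfold r1; lra).
  destruct (HF_small d nu H y Hy) as [R [HR HhR]].
  assert (Hr1R : r1 < R).
  { destruct (Rlt_le_dec r1 R); auto. assert (X := HF_mono d nu R r1 H HR r). lra. }
  set (K := 2 * R / r1 ^ 2 * hfun d nu r1).
  assert (HK : 0 <= K).
  { unfold K. apply Rmult_le_pos. unfold Rdiv; apply Rmult_le_pos; [lra| left; apply Rinv_0_lt_compat, pow_lt; lra].
    apply HF_nonneg; auto. }
  set (cl := fun x => Rmax r1 (Rmin R x)).
  assert (Hcl : forall x, r1 <= cl x <= R).
  { intros x; unfold cl, Rmax, Rmin; repeat destruct Rle_dec; lra. }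
  set (phi := fun x => y - hfun d nu (cl x)).
  assert (Hc : continuity phi).
  { apply (lip_cont phi K HK). intros a b. unfold phi.
    replace (y - hfun d nu (cl a) - (y - hfun d nu (cl b))) with (hfun d nu (cl b) - hfun d nu (cl a)) by ring.
    assert (CL : Rabs (cl a - cl b) <= Rabs (a - b)) by (apply clamp_lip; lra).
    apply Rle_trans with (K * Rabs (cl a - cl b)); [|apply Rmult_le_compat_l; auto].
    destruct (Hcl a) as [A1 A2]. destruct (Hcl b) as [B1 B2].
    destruct (Rle_lt_dec (cl a) (cl b)) as [Hab|Hab].
    - assert (X := HF_lip d nu r1 (cl a) (cl b) R H Hr1 A1 Hab B2).
      assert (Y := HF_mono d nu (cl a) (cl b) H ltac:(lra) Hab).
      fold K in X. rewrite Rabs_left1 by lra. rewrite (Rabs_left1 (cl a - cl b)) by lra. lra.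
    - assert (X := HF_lip d nu r1 (cl b) (cl a) R H Hr1 B1 ltac:(lra) A2).
      assert (Y := HF_mono d nu (cl b) (cl a) H ltac:(lra) ltac:(lra)).
      fold K in X. rewrite Rabs_right by lra. rewrite (Rabs_right (cl a - cl b)) by lra. lra. }
  assert (C1 : cl r1 = r1) by (unfold cl, Rmax, Rmin; repeat destruct Rle_dec; lra).
  assert (C2 : cl R = R) by (unfold cl, Rmax, Rmin; repeat destruct Rle_dec; lra).
  destruct (IVT phi r1 R Hc Hr1R) as [z [Hz1 Hz2]].
  - unfold phi; rewrite C1; lra.
  - unfold phi; rewrite C2; lra.
  - assert (Cz : cl z = z) by (unfold cl, Rmax, Rmin; repeat destruct Rle_dec; lra).
    exists z. split; [lra|]. unfold phi in Hz2. rewrite Cz in Hz2. lra.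
Qed.

Lemma hinv_spec : forall d nu y, Hyp d nu -> 0 < y -> 0 < hinv d nu y /\ hfun d nu (hinv d nu y) = y.
Proof.
  intros d nu y H Hy. unfold hinv. apply epsilon_spec. apply HF_surj; auto.
Qed.

Lemma hinv_mono : forall d nu y y', Hyp d nu -> 0 < y' -> y' <= y -> hinv d nu y <= hinv d nu y'.
Proof.
  intros d nu y y' H Hy' Hyy.
  destruct (hinv_spec d nu y H ltac:(lra)) as [A1 A2].
  destruct (hinv_spec d nu y' H Hy') as [B1 B2].
  destruct (Rle_lt_dec (hinv d nu y) (hinv d nu y')) as [|Hc]; auto.
  assert (X := HF_mono d nu (hinv d nu y') (hinv d nu y) H B1 ltac:(lra)).
  rewrite A2, B2 in X. assert (y = y') by lra. subst. lra.
Qed.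

Lemma hinv_up : forall d nu u t, Hyp d nu -> 0 < u -> u <= t ->
  2 * ln (hinv d nu (1 / u)) <= 2 * ln (hinv d nu (1 / t)) + ln u - ln t.
Proof.
  intros d nu u t H Hu Hut.
  assert (Ht : 0 < t) by lra.
  set (r := hinv d nu (1 / u)). set (r' := hinv d nu (1 / t)).
  destruct (hinv_spec d nu (1 / u) H ltac:(apply Rdiv_lt_0_compat; lra)) as [A1 A2].
  destruct (hinv_spec d nu (1 / t) H ltac:(apply Rdiv_lt_0_compat; lra)) as [B1 B2].
  fold r in A1, A2. fold r' in B1, B2.
  assert (Hrr : r <= r').
  { apply hinv_mono; auto. apply Rdiv_lt_0_compat; lra.
    unfold Rdiv; rewrite !Rmult_1_l; apply Rinv_le_contravar; lra. }
  assert (X := HF_scale d nu r r' H A1 Hrr). rewrite A2, B2 in X.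
  assert (Y : r * r * t <= r' * r' * u).
  { apply Rmult_le_compat_r with (r := r' * r' * u * t) in X.
    replace ((r / r') ^ 2 * (1 / u) * (r' * r' * u * t)) with (r * r * t) in X by (field; lra).
    replace (1 / t * (r' * r' * u * t)) with (r' * r' * u) in X by (field; lra). exact X.
    repeat apply Rmult_le_pos; lra. }
  apply ln_le in Y; [|repeat apply Rmult_lt_0_compat; lra].
  rewrite !ln_mult in Y by (try apply Rmult_lt_0_compat; lra). lra.
Qed.


Lemma ln_key : forall t v C E, 0 < t -> 0 < v -> 0 < C -> 1 / t <= C * exp E * (1 / v) ->
  - ln t <= ln C + E - ln v.
Proof.
  intros t v C E Ht Hv HC H.
  assert (Q : 0 < 1 / t) by (apply Rdiv_lt_0_compat; lra).
  apply (ln_le _ _ Q) in H.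
  assert (0 < exp E) by apply exp_pos.
  assert (0 < 1 / v) by (apply Rdiv_lt_0_compat; lra).
  rewrite !ln_mult in H by (first [assumption | apply Rmult_lt_0_compat; assumption]).
  rewrite ln_exp in H. unfold Rdiv in H. rewrite !Rmult_1_l in H. rewrite !ln_Rinv in H by auto. lra.
Qed.

Lemma hinv_low : forall d nu alpha Ch T v t, Hyp d nu -> 0 < alpha -> alpha <= 2 -> 1 <= Ch ->
  (forall lam r, 0 < lam -> lam <= 1 -> 0 < r -> r <= 1 ->
     hfun d nu r <= Ch * Rpower lam alpha * hfun d nu (lam * r)) ->
  0 < v -> v <= t -> t <= T ->
  alpha * ln (hinv d nu (1 / t)) + ln v - ln t - ln (Ch * (Rmax (hinv d nu (1 / T)) 1) ^ 2)
  <= alpha * ln (hinv d nu (1 / v)).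
Proof.
  intros d nu alpha Ch T v t H Ha1 Ha2 HCh Hh Hv Hvt HtT.
  assert (Ht : 0 < t) by lra. assert (HT : 0 < T) by lra.
  set (rho := hinv d nu (1 / v)). set (r := hinv d nu (1 / t)). set (RT := hinv d nu (1 / T)).
  set (R := Rmax RT 1).
  destruct (hinv_spec d nu (1 / v) H ltac:(apply Rdiv_lt_0_compat; lra)) as [A1 A2].
  destruct (hinv_spec d nu (1 / t) H ltac:(apply Rdiv_lt_0_compat; lra)) as [B1 B2].
  destruct (hinv_spec d nu (1 / T) H ltac:(apply Rdiv_lt_0_compat; lra)) as [C1 C2].
  fold rho in A1, A2. fold r in B1, B2. fold RT in C1, C2.
  assert (Hrho : rho <= r).
  { apply hinv_mono; auto. apply Rdiv_lt_0_compat; lra.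
    unfold Rdiv; rewrite !Rmult_1_l; apply Rinv_le_contravar; lra. }
  assert (HrT : r <= RT).
  { apply hinv_mono; auto. apply Rdiv_lt_0_compat; lra.
    unfold Rdiv; rewrite !Rmult_1_l; apply Rinv_le_contravar; lra. }
  assert (HR1 : 1 <= R) by apply Rmax_r. assert (HR2 : RT <= R) by apply Rmax_l.
  assert (LC : ln (Ch * R ^ 2) = ln Ch + 2 * ln R).
  { replace (R ^ 2) with (R * R) by ring. rewrite !ln_mult by (try apply Rmult_lt_0_compat; lra). ring. }
  rewrite LC.
  assert (LCh : 0 <= ln Ch) by (rewrite <- ln_1; apply ln_le; lra).
  assert (LR : 0 <= ln R) by (rewrite <- ln_1; apply ln_le; lra).
  assert (LrR : ln r <= ln R) by (apply ln_le; lra).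
  assert (Lrr : ln rho <= ln r) by (apply ln_le; lra).
  destruct (Rle_lt_dec r 1) as [Hr1|Hr1].
  - assert (X := Hh (rho / r) r ltac:(apply Rdiv_lt_0_compat; lra)
                  ltac:(apply Rmult_le_reg_r with r; [lra|]; field_simplify; lra) B1 Hr1).
    replace (rho / r * r) with rho in X by (field; lra).
    rewrite A2, B2 in X. unfold Rpower in X.
    apply ln_key in X; try lra.
    replace (ln (rho / r)) with (ln rho - ln r) in X by (unfold Rdiv; rewrite ln_mult, ln_Rinv; try apply Rinv_0_lt_compat; lra).
    lra.
  - destruct (Rle_lt_dec 1 rho) as [Hrho1|Hrho1].
    + assert (X := HF_mono d nu rho r H A1 Hrho). rewrite A2, B2 in X.
      assert (X' : 1 / t <= 1 * exp 0 * (1 / v)) by (rewrite exp_0; lra).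
      apply ln_key in X'; try lra. rewrite ln_1 in X'.
      assert (0 <= ln rho) by (rewrite <- ln_1; apply ln_le; lra).
      assert (0 <= ln r) by (rewrite <- ln_1; apply ln_le; lra).
      assert (0 <= alpha * ln rho) by (apply Rmult_le_pos; lra).
      assert (alpha * ln r <= 2 * ln r) by (apply Rmult_le_compat_r; lra).
      lra.
    + assert (X1 := HF_mono d nu 1 r H ltac:(lra) ltac:(lra)).
      assert (X2 := Hh rho 1 A1 ltac:(lra) ltac:(lra) ltac:(lra)).
      rewrite Rmult_1_r in X2. rewrite A2, B2 in *.
      assert (X : 1 / t <= Ch * Rpower rho alpha * (1 / v)) by lra.
      unfold Rpower in X. apply ln_key in X; try lra.
      assert (0 <= ln r) by (rewrite <- ln_1; apply ln_le; lra).
      assert (alpha * ln r <= 2 * ln r) by (apply Rmult_le_compat_r; lra).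
      lra.
Qed.

Lemma tame_conv : forall d nu theta eta gam bet t x y, Hyp d nu -> 0 < x -> x <= y -> y < t ->
  tame (conv_integrand d nu theta eta gam bet t) x y.
Proof.
  intros d nu theta eta gam bet t x y H Hx Hxy Hy.
  apply (tame_ext (fun u => ((Rpower u (- eta) * Rpower (hinv d nu (1 / u)) gam) * Rpower (t - u) (- theta))
                            * Rpower (hinv d nu (1 / (t - u))) bet)); [|intros; reflexivity].
  apply tame_mult; auto. apply tame_mult; auto. apply tame_mult; auto.
  - apply tame_pow_l; auto.
  - unfold Rpower. apply (tame_exp (fun u => ln (hinv d nu (1 / u)))); auto.
    intros s u Hs Hsu Hu.
    assert (P := proj1 (hinv_spec d nu (1 / s) H ltac:(apply Rdiv_lt_0_compat; lra))).
    apply ln_le; auto. apply hinv_mono; auto. apply Rdiv_lt_0_compat; lra.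
    unfold Rdiv; rewrite !Rmult_1_l; apply Rinv_le_contravar; lra.
  - apply tame_pow_r; auto.
  - apply (tame_ext (fun u => exp (- bet * (fun u => - ln (hinv d nu (1 / (t - u)))) u))).
    + apply tame_exp; auto. intros s u Hs Hsu Hu.
      assert (P := proj1 (hinv_spec d nu (1 / (t - u)) H ltac:(apply Rdiv_lt_0_compat; lra))).
      assert (ln (hinv d nu (1 / (t - u))) <= ln (hinv d nu (1 / (t - s)))); [|lra].
      apply ln_le; auto. apply hinv_mono; auto. apply Rdiv_lt_0_compat; lra.
      unfold Rdiv; rewrite !Rmult_1_l; apply Rinv_le_contravar; lra.
    + intros s Hs. unfold Rpower. f_equal. ring.
Qed.

Lemma conv_pos : forall d nu theta eta gam bet t u, 0 <= conv_integrand d nu theta eta gam bet t u.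
Proof.
  intros. unfold conv_integrand. left. repeat apply Rmult_lt_0_compat; apply Rpower_pos.
Qed.

Lemma pw_i : forall d nu theta eta gam bet t u, Hyp d nu -> 0 <= gam -> 0 <= bet -> 0 < u < t ->
  conv_integrand d nu theta eta gam bet t u <=
  exp ((gam + bet) * ln (hinv d nu (1 / t)) - ((gam + bet) / 2) * ln t) *
  (Rpower u (gam / 2 + 1 - eta - 1) * Rpower (t - u) (bet / 2 + 1 - theta - 1)).
Proof.
  intros d nu theta eta gam bet t u H Hg Hb Hu.
  assert (U1 := hinv_up d nu u t H ltac:(lra) ltac:(lra)).
  assert (U2 := hinv_up d nu (t - u) t H ltac:(lra) ltac:(lra)).
  apply Rmult_le_compat_l with (r := gam) in U1; auto.
  apply Rmult_le_compat_l with (r := bet) in U2; auto.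
  unfold conv_integrand, Rpower. rewrite <- !exp_plus. apply exp_le_mono. lra.
Qed.

Lemma g_bound : forall alpha g x h D lC, 0 < alpha -> alpha <= 2 ->
  2 * x <= 2 * h + D -> alpha * h + D - lC <= alpha * x ->
  g * x <= g * h + Rmin (g / 2) (g / alpha) * D - (Rmin g 0 / alpha) * lC.
Proof.
  intros alpha g x h D lC Ha1 Ha2 H1 H2.
  assert (Hinv : / 2 <= / alpha) by (apply Rinv_le_contravar; lra).
  destruct (Rle_lt_dec 0 g) as [Hg|Hg].
  - rewrite Rmin_left. rewrite Rmin_right by lra.
    + unfold Rdiv at 2. rewrite Rmult_0_l.
      apply Rmult_le_compat_l with (r := g) in H1; auto. lra.
    + unfold Rdiv; apply Rmult_le_compat_l; auto.
  - rewrite Rmin_right. rewrite Rmin_left by lra.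
    + set (q := g / alpha). assert (Eg : g = q * alpha) by (unfold q; field; lra).
      assert (Hq : q < 0) by (unfold q; unfold Rdiv; apply Rmult_neg_pos; [lra| apply Rinv_0_lt_compat; lra]).
      apply Rmult_le_compat_neg_l with (r := q) in H2; [|lra].
      rewrite Eg. lra.
    + unfold Rdiv. apply Rmult_le_compat_neg_l; lra.
Qed.

Lemma pw_ii : forall d nu alpha Ch T theta eta gam bet t u, Hyp d nu -> 0 < alpha -> alpha <= 2 -> 1 <= Ch ->
  (forall lam r, 0 < lam -> lam <= 1 -> 0 < r -> r <= 1 ->
     hfun d nu r <= Ch * Rpower lam alpha * hfun d nu (lam * r)) ->
  t <= T -> 0 < u < t ->
  conv_integrand d nu theta eta gam bet t u <=
  exp ((gam + bet) * ln (hinv d nu (1 / t))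
       - (Rmin (gam / 2) (gam / alpha) + Rmin (bet / 2) (bet / alpha)) * ln t
       - ((Rmin bet 0 + Rmin gam 0) / alpha) * ln (Ch * (Rmax (hinv d nu (1 / T)) 1) ^ 2)) *
  (Rpower u (Rmin (gam / 2) (gam / alpha) + 1 - eta - 1) * Rpower (t - u) (Rmin (bet / 2) (bet / alpha) + 1 - theta - 1)).
Proof.
  intros d nu alpha Ch T theta eta gam bet t u H Ha1 Ha2 HCh Hh HtT Hu.
  assert (U1 := hinv_up d nu u t H ltac:(lra) ltac:(lra)).
  assert (U2 := hinv_up d nu (t - u) t H ltac:(lra) ltac:(lra)).
  assert (L1 := hinv_low d nu alpha Ch T u t H Ha1 Ha2 HCh Hh ltac:(lra) ltac:(lra) HtT).
  assert (L2 := hinv_low d nu alpha Ch T (t - u) t H Ha1 Ha2 HCh Hh ltac:(lra) ltac:(lra) HtT).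
  set (lC := ln (Ch * Rmax (hinv d nu (1 / T)) 1 ^ 2)) in *.
  assert (G1 := g_bound alpha gam (ln (hinv d nu (1 / u))) (ln (hinv d nu (1 / t))) (ln u - ln t) lC
                 Ha1 Ha2 ltac:(lra) ltac:(lra)).
  assert (G2 := g_bound alpha bet (ln (hinv d nu (1 / (t - u)))) (ln (hinv d nu (1 / t))) (ln (t - u) - ln t) lC
                 Ha1 Ha2 ltac:(lra) ltac:(lra)).
  unfold conv_integrand, Rpower. rewrite <- !exp_plus. apply exp_le_mono.
  unfold Rdiv in *. lra.
Qed.

Theorem mainTheorem16 :
  forall (d : nat) (nu : R -> R),
    (0 < d)%nat ->
    (forall s, 0 < s -> 0 <= nu s) ->
    (forall s1 s2, 0 < s1 -> s1 <= s2 -> nu s2 <= nu s1) ->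
    (exists l, imp_int_0inf (fun s => Rmin 1 (s ^ 2) * nu s * s ^ (pred d)) l) ->
    (forall M, exists del, 0 < del /\
       forall r, 0 < r -> r < del -> M < hfun d nu r) ->
    (* (i) *)
    (forall theta eta gam bet t,
        0 < t -> 0 <= bet -> 0 <= gam ->
        bet / 2 + 1 - theta > 0 -> gam / 2 + 1 - eta > 0 ->
        exists l, imp_int_ab (conv_integrand d nu theta eta gam bet t) 0 t l /\
          l <= Beta (bet / 2 + 1 - theta) (gam / 2 + 1 - eta)
               * Rpower t (1 - eta - theta)
               * Rpower (hinv d nu (1 / t)) (gam + bet))
    /\
    (* (ii) *)
    (forall alpha Ch,
        0 < alpha -> alpha <= 2 -> 1 <= Ch ->
        (forall lam r, 0 < lam -> lam <= 1 -> 0 < r -> r <= 1 ->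
           hfun d nu r <= Ch * Rpower lam alpha * hfun d nu (lam * r)) ->
        forall T theta eta gam bet t,
          0 < T -> 0 < t -> t <= T ->
          Rmin (bet / 2) (bet / alpha) + 1 - theta > 0 ->
          Rmin (gam / 2) (gam / alpha) + 1 - eta > 0 ->
          exists l, imp_int_ab (conv_integrand d nu theta eta gam bet t) 0 t l /\
            l <= Rpower (Ch * (Rmax (hinv d nu (1 / T)) 1) ^ 2)
                        (- (Rmin bet 0 + Rmin gam 0) / alpha)
                 * Beta (Rmin (bet / 2) (bet / alpha) + 1 - theta)
                        (Rmin (gam / 2) (gam / alpha) + 1 - eta)
                 * Rpower t (1 - eta - theta)
                 * Rpower (hinv d nu (1 / t)) (gam + bet)).
Proof.
  intros d nu Hd Hnu0 Hnu Hex Hinf.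
  assert (H : Hyp d nu) by (repeat split; auto).
  split.
  - intros theta eta gam bet t Ht Hb Hg Hb2 Hg2.
    destruct (conv_lemma (conv_integrand d nu theta eta gam bet t) t (gam / 2 + 1 - eta) (bet / 2 + 1 - theta)
               (exp ((gam + bet) * ln (hinv d nu (1 / t)) - ((gam + bet) / 2) * ln t)))
      as [l [Hl Hle]]; try lra.
    + left; apply exp_pos.
    + intros x y Hx Hxy Hy. apply tame_conv; auto.
    + intros u Hu. split. apply conv_pos. apply pw_i; auto.
    + exists l. split; auto. eapply Rle_trans; [exact Hle|]. right.
      unfold Rpower.
      set (Bt := Beta _ _).
      replace (Bt * exp ((1 - eta - theta) * ln t) * exp ((gam + bet) * ln (hinv d nu (1 / t))))
        with (Bt * (exp ((1 - eta - theta) * ln t) * exp ((gam + bet) * ln (hinv d nu (1 / t))))) by ring.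
      rewrite <- !exp_plus. rewrite Rmult_comm. apply f_equal. apply f_equal. unfold Rdiv. ring.
  - intros alpha Ch Ha1 Ha2 HCh Hh T theta eta gam bet t HT Ht HtT Hb2 Hg2.
    destruct (conv_lemma (conv_integrand d nu theta eta gam bet t) t
               (Rmin (gam / 2) (gam / alpha) + 1 - eta) (Rmin (bet / 2) (bet / alpha) + 1 - theta)
               (exp ((gam + bet) * ln (hinv d nu (1 / t))
                 - (Rmin (gam / 2) (gam / alpha) + Rmin (bet / 2) (bet / alpha)) * ln t
                 - ((Rmin bet 0 + Rmin gam 0) / alpha) * ln (Ch * (Rmax (hinv d nu (1 / T)) 1) ^ 2))))
      as [l [Hl Hle]]; try lra.
    + left; apply exp_pos.
    + intros x y Hx Hxy Hy. apply tame_conv; auto.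
    + intros u Hu. split. apply conv_pos. apply pw_ii with (T := T); auto.
    + exists l. split; auto. eapply Rle_trans; [exact Hle|]. right.
      unfold Rpower. rewrite <- !exp_plus.
      set (Bt := Beta _ _).
      replace (exp (- (Rmin bet 0 + Rmin gam 0) / alpha * ln (Ch * Rmax (hinv d nu (1 / T)) 1 ^ 2)) * Bt *
               exp ((1 - eta - theta) * ln t) * exp ((gam + bet) * ln (hinv d nu (1 / t))))
        with (Bt * (exp (- (Rmin bet 0 + Rmin gam 0) / alpha * ln (Ch * Rmax (hinv d nu (1 / T)) 1 ^ 2)) *
               exp ((1 - eta - theta) * ln t) * exp ((gam + bet) * ln (hinv d nu (1 / t))))) by ring.
      rewrite <- !exp_plus. rewrite Rmult_comm. apply f_equal. apply f_equal. unfold Rdiv. ring.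
Qed.
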